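(* Let $C_*\ge3$ and $H>0$, and let $R_e=R_e(C_*,H)$ be the $q$-effective radius. Let $x,y\in\mathbb{Z}^d$ and let $\gamma\in\mathbb{G}_H(x,y)$ be a geodesic of $\mathrm{T}_H(x,y)$. Suppose $e\in\gamma$ is an edge with $x,y\notin\Lambda_{3R_e}(e)$. Then there exists a path $\eta_e$ from $x$ to $y$ such that (a) $\eta_e\cap\Lambda_{R_e-1}(e)=\emptyset$ and every edge of $\eta_e\setminus\gamma$ is $q$-open; (b) $|\eta_e\setminus\gamma|\le C_*R_e$.
   Context: Edge weights $(\tau_e)$ on $\mathcal{E}(\mathbb{Z}^d)$ are i.i.d. with values in $[0,\infty]$; for a fixed $\lambda>0$, an edge is $q$-open if $\tau_e\le\lambda$. A path is a sequence of distinct vertices with consecutive vertices at $\ell^1$-distance 1; $\mathcal{P}(A)$ is the set of paths in $A$, $|\cdot|$ counts edges. $\mathrm{T}_H^A(u,v)$ is the passage time with weights $\tau_e\wedge H$ over paths in $A$; $\mathrm{T}_H=\mathrm{T}_H^{\mathbb{Z}^d}$; $\mathbb{G}_H(u,v;A)$ is the set of paths in $A$ from $u$ to $v$ attaining $\mathrm{T}_H^A(u,v)$, $\mathbb{G}_H(u,v)=\mathbb{G}_H(u,v;\mathbb{Z}^d)$, $\mathbb{G}_H(A)=\bigcup_{u,v\in A}\mathbb{G}_H(u,v;A)$. $\mathrm{D}_q^U(A,B)$ is the minimal number of edges of a $q$-open path inside $U$ from $A$ to $B$. $\Lambda_t(x)=x+[-t,t]^d\cap\mathbb{Z}^d$,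 $\partial\Lambda_t(x)=\Lambda_t(x)\setminus\Lambda_{t-1}(x)$; for $e=(x_e,y_e)$ with $\|x_e\|_1<\|y_e\|_1$, $\Lambda_N(e)=\Lambda_N(x_e)$, $\mathrm{A}_N(e)=\Lambda_{3N}(e)\setminus\Lambda_N(e)$, and $\mathscr{C}(\mathrm{A}_N(e))$ is the set of paths inside $\mathrm{A}_N(e)$ joining $\partial\Lambda_N(e)$ and $\partial\Lambda_{3N}(e)$. The effective radius is $R_e=\inf\{N\ge3:\forall\gamma_1,\gamma_2\in\mathbb{G}_H(\Lambda_{C_*N}(e))\cap\mathscr{C}(\mathrm{A}_N(e)),\ \mathrm{D}_q^{\mathrm{A}_N(e)}(\gamma_1,\gamma_2)\le C_*N\}$. (In the paper $C_*$ is the constant fixed by its tail estimate for $R_e$.) *)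

(* Defs.v *)
From HB Require Import structures.
From mathcomp Require Import all_boot all_order all_algebra.
From mathcomp Require Import reals constructive_ereal.
Set Implicit Arguments. Unset Strict Implicit. Unset Printing Implicit Defensive.
Import Order.TTheory GRing.Theory Num.Theory.
Local Open Scope ring_scope.

Definition vtx (d : nat) := {ffun 'I_d -> int}.

Definition norm1 {d} (u : vtx d) : nat := (\sum_(i < d) `|u i|%N)%N.
Definition dist1 {d} (u v : vtx d) : nat := (\sum_(i < d) `|u i - v i|%N)%N.
Definition adj {d} (u v : vtx d) : bool := dist1 u v == 1%N.

(* An edge {u,v} is represented canonically as (x_e, y_e) with ||x_e||_1 < ||y_e||_1. *)
Definition canon {d} (u v : vtx d) : vtx d * vtx d :=
  if (norm1 u < norm1 v)%N then (u, v) else (v, u).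

Definition is_path_uv {d} (u v : vtx d) (s : seq (vtx d)) : bool :=
  [&& uniq s, sorted adj s, ohead s == Some u & ohead (rev s) == Some v].

Definition pedges {d} (s : seq (vtx d)) : seq (vtx d * vtx d) :=
  [seq canon p.1 p.2 | p <- zip s (behead s)].
Definition plen {d} (s : seq (vtx d)) : nat := (size s).-1.

Definition box {R : realType} {d} (t : R) (x : vtx d) : pred (vtx d) :=
  fun z => [forall i, `|((z i - x i)%:~R : R)| <= t].
Definition bdry {R : realType} {d} (t : R) (x : vtx d) : pred (vtx d) :=
  fun z => box t x z && ~~ box (t - 1) x z.
(* A_N(e), taken closed at its inner boundary. *)
Definition annulus {R : realType} {d} (N : nat) (e : vtx d * vtx d) : pred (vtx d) :=
  fun z => box (3 * (N%:R : R)) e.1 z && ~~ box ((N%:R : R) - 1) e.1 z.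

Definition wtH {R : realType} {d} (H : R) (tau : vtx d * vtx d -> \bar R)
  (f : vtx d * vtx d) : R := fine (Order.min (tau f) H%:E).
Definition pweight {R : realType} {d} (H : R) (tau : vtx d * vtx d -> \bar R)
  (s : seq (vtx d)) : R := \sum_(f <- pedges s) wtH H tau f.

Definition geod {R : realType} {d} (H : R) (tau : vtx d * vtx d -> \bar R)
  (A : pred (vtx d)) (u v : vtx d) (s : seq (vtx d)) : Prop :=
  [/\ is_path_uv u v s, all A s &
      forall s', is_path_uv u v s' -> all A s' -> pweight H tau s <= pweight H tau s'].

Definition geodA {R : realType} {d} (H : R) (tau : vtx d * vtx d -> \bar R)
  (A : pred (vtx d)) (s : seq (vtx d)) : Prop :=
  exists u v, [/\ A u, A v & geod H tau A u v s].

Definition qopen {R : realType} {d} (lam : R) (tau : vtx d * vtx d -> \bar R)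
  (f : vtx d * vtx d) : bool := (tau f <= lam%:E)%E.

Definition crossing {R : realType} {d} (N : nat) (e : vtx d * vtx d)
  (s : seq (vtx d)) : Prop :=
  all (@annulus R d N e) s /\
  exists u v, [/\ is_path_uv u v s, bdry (N%:R : R) e.1 u & bdry (3 * (N%:R : R)) e.1 v].

Definition Dq_le {R : realType} {d} (lam : R) (tau : vtx d * vtx d -> \bar R)
  (U A B : pred (vtx d)) (c : R) : Prop :=
  exists u v s, [/\ is_path_uv u v s, all U s, A u & B v] /\
     all (qopen lam tau) (pedges s) /\ (plen s)%:R <= c.

Definition good_radius {R : realType} {d} (lam H Cs : R)
  (tau : vtx d * vtx d -> \bar R) (e : vtx d * vtx d) (N : nat) : Prop :=
  forall g1 g2 : seq (vtx d),
    geodA H tau (box (Cs * N%:R) e.1) g1 -> crossing (R:=R) N e g1 ->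
    geodA H tau (box (Cs * N%:R) e.1) g2 -> crossing (R:=R) N e g2 ->
    Dq_le lam tau (annulus (R:=R) N e) (fun z => z \in g1) (fun z => z \in g2) (Cs * N%:R).

Definition is_eff_radius {R : realType} {d} (lam H Cs : R)
  (tau : vtx d * vtx d -> \bar R) (e : vtx d * vtx d) (N : nat) : Prop :=
  [/\ (3 <= N)%N, good_radius lam H Cs tau e N &
      forall M, (3 <= M)%N -> good_radius lam H Cs tau e M -> (N <= M)%N].

(* Main.v *)
Require Import Defs.
From HB Require Import structures.
From mathcomp Require Import all_boot all_order all_algebra.
From mathcomp Require Import reals constructive_ereal.
From mathcomp Require Import zify ring lra.
Import Order.TTheory GRing.Theory Num.Theory.
Set Implicit Arguments. Unset Strict Implicit. Unset Printing Implicit Defensive.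

Section Comb.
Variable d : nat.
Notation V := (vtx d).

Fixpoint edg (s : seq V) : seq (V * V) :=
  match s with
  | a :: ((b :: _) as t) => canon a b :: edg t
  | _ => [::]
  end.

Arguments edg : simpl nomatch.

Lemma pedgesE s : pedges s = edg s.
Proof.
elim: s => [|a [|b t] IH] //=.
by rewrite /pedges /= in IH *; rewrite IH.
Qed.

Lemma edg_cons_mem a t f : f \in edg t -> f \in edg (a :: t).
Proof. by case: t => [|b t] //= H; rewrite inE H orbT. Qed.

Lemma edg_prefix s1 s2 f : f \in edg s1 -> f \in edg (s1 ++ s2).
Proof.
elim: s1 => [|a [|b t] IH] //= H.
rewrite inE in H; case/orP: H => H; first by rewrite inE H.
by rewrite inE (IH H) orbT.
Qed.

Lemma edg_suffix s1 s2 f : f \in edg s2 -> f \in edg (s1 ++ s2).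
Proof. by elim: s1 => [|a s1 IH] //= H; apply: edg_cons_mem; apply: IH. Qed.

Lemma edgE1 L a r : edg (L ++ a :: r) = edg (rcons L a) ++ edg (a :: r).
Proof.
elim: L => [|l [|l' L'] IH] //=; rewrite /= in IH.
by rewrite IH.
Qed.

Lemma edgE2 a t M : edg (a :: t ++ M) = edg (a :: t) ++ edg (last a t :: M).
Proof.
elim: t a => [|b t IH] a //=.
by rewrite -IH.
Qed.

Lemma edg_decomp L a t M :
  edg (L ++ a :: t ++ M) = edg (rcons L a) ++ edg (a :: t) ++ edg (last a t :: M).
Proof. by rewrite edgE1 -edgE2. Qed.

Lemma edg_drop k t : edg (drop k t) = drop k (edg t).
Proof.
elim: t k => [|a t IH] [|k] //=; first by rewrite drop0.
rewrite IH; by case: t IH.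
Qed.

Lemma edg_mem1 f s : f \in edg s -> exists a b, [/\ f = canon a b, a \in s & b \in s].
Proof.
elim: s => [|a [|b t] IH] //=.
rewrite inE => /orP [/eqP ->|H].
  by exists a, b; rewrite !inE !eqxx ?orbT.
case: (IH H) => a' [b' [-> Ha Hb]]; exists a', b'.
by split => //; rewrite inE ?Ha ?Hb orbT.
Qed.

Lemma size_edg s : size (edg s) = (size s).-1.
Proof. by elim: s => [|a [|b t] IH] //=; rewrite IH. Qed.

Fixpoint lerase (s : seq V) : seq V :=
  match s with
  | [::] => [::]
  | a :: s' => let t := lerase s' in
      if a \in t then drop (index a t) t else a :: t
  end.

Arguments lerase : simpl never.
Lemma lerase_cons a s : lerase (a :: s) =
  if a \in lerase s then drop (index a (lerase s)) (lerase s) else a :: lerase s.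
Proof. by []. Qed.

Lemma last_drop (z : V) i t : i < size t -> last z (drop i t) = last z t.
Proof.
elim: t i z => [|a t IH] [|i] z //= Hi.
rewrite IH //; by case: t {IH} Hi.
Qed.

Lemma lerase_spec a s : exists r, lerase (a :: s) = a :: r /\ last a r = last a s.
Proof.
elim: s a => [|b s IH] a; first by exists [::].
case: (IH b) => r' [E L]. rewrite lerase_cons E.
case: ifP => Ha.
  have Hi : index a (b :: r') < size (b :: r') by rewrite index_mem.
  rewrite (drop_nth a Hi) nth_index //.
  exists (drop (index a (b :: r')).+1 (b :: r')); split => //.
  have := last_drop a Hi.
  rewrite (drop_nth a Hi) nth_index //= => ->. by [].
by exists (b :: r').
Qed.

Lemma lerase_uniq s : uniq (lerase s).
Proof.
elim: s => [|a s IH] //; rewrite lerase_cons.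
case: ifP => H; first exact: drop_uniq.
by rewrite /= H IH.
Qed.

Lemma lerase_sub s : {subset lerase s <= s}.
Proof.
elim: s => [|a s IH] // z; rewrite lerase_cons.
case: ifP => H.
  move/mem_drop => Hz. by rewrite inE (IH _ Hz) orbT.
rewrite !inE => /orP [->//|Hz]. by rewrite (IH _ Hz) orbT.
Qed.

Lemma lerase_sorted (e : rel V) s : sorted e s -> sorted e (lerase s).
Proof.
elim: s => [|a s IH] // Hs; rewrite lerase_cons.
have Hs' : sorted e s by case: s Hs {IH} => //= b s /andP [].
case: ifP => H; first exact/drop_sorted/IH.
case: s Hs Hs' IH H => [|b s] Hs Hs' IH H; first by [].
case: (lerase_spec b s) => r [E _]. rewrite E in IH *.
rewrite /=. case/andP: Hs => -> _. exact: (IH Hs').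
Qed.

Lemma lerase_edg s : subseq (edg (lerase s)) (edg s).
Proof.
elim: s => [|a s IH] //; rewrite lerase_cons.
have H1 : subseq (edg s) (edg (a :: s)).
  case: s {IH} => [|b s] //=. exact: subseq_cons.
case: ifP => H.
  rewrite edg_drop. apply: subseq_trans (drop_subseq _ _) _.
  exact: subseq_trans IH H1.
case: s IH H1 H => [|b s] IH H1 H; first by [].
case: (lerase_spec b s) => r [E _]. rewrite E in IH *.
by rewrite /= eqxx.
Qed.

End Comb.


Section Adj.
Variable d : nat.
Notation V := (vtx d).

Lemma dist1C (u v : V) : dist1 u v = dist1 v u.
Proof. rewrite /dist1; apply: eq_bigr => i _. by rewrite -abszN opprB. Qed.

Lemma adj_sym (u v : V) : adj u v = adj v u.
Proof. by rewrite /adj dist1C. Qed.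

Lemma norm_dist_parity (u v : V) :
  exists K, (norm1 u + norm1 v = dist1 u v + 2 * K)%N.
Proof.
exists (\sum_(i < d) ((`|u i|%N + `|v i|%N - `|u i - v i|%N) %/ 2))%N.
rewrite /norm1 /dist1 -big_split /= big_distrr -big_split /=.
apply: eq_bigr => i _. lia.
Qed.

Lemma adj_norm (u v : V) : adj u v -> norm1 u != norm1 v.
Proof.
rewrite /adj => /eqP H. case: (norm_dist_parity u v) => K.
rewrite H => E. apply/eqP => E2. rewrite E2 in E. lia.
Qed.

Lemma canon_sym (u v : V) : adj u v -> canon u v = canon v u.
Proof.
move/adj_norm. rewrite /canon => H.
case: ltnP => H1; case: ltnP => H2 //; lia.
Qed.

Lemma sorted_adj_rev (s : seq V) : sorted adj s -> sorted adj (rev s).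
Proof.
rewrite rev_sorted. apply: sub_sorted => a b /=. by rewrite adj_sym.
Qed.

Lemma edg_rev (s : seq V) : sorted adj s -> edg (rev s) = rev (edg s).
Proof.
elim: s => [|a [|b s] IH] // Hs.
case/andP: Hs => Hab Hs.
rewrite (_ : edg (a :: b :: s) = canon a b :: edg (b :: s)) //.
rewrite rev_cons (rev_cons b) -cats1 -cats1 -catA cat1s edgE1 cats1 -rev_cons (IH Hs).
rewrite rev_cons canon_sym //.
by rewrite adj_sym.
Qed.

Lemma ohead_rev (a : V) t : ohead (rev (a :: t)) = Some (last a t).
Proof. by rewrite lastI rev_rcons. Qed.

Lemma ispathP (u v : V) s : is_path_uv u v s <->
  exists t, [/\ s = u :: t, last u t = v, uniq s & sorted adj s].
Proof.
split.
  case/and4P => Hu Hs; case: s Hu Hs => [|a t] // Hu Hs /eqP [<-].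
  rewrite ohead_rev => /eqP [<-]. by exists t.
case=> t [-> <- Hu Hs]. by rewrite /is_path_uv Hu Hs ohead_rev /= !eqxx.
Qed.

Lemma path_rev (u v : V) s : is_path_uv u v s -> is_path_uv v u (rev s).
Proof.
case/and4P => Hu Hs Hh Ht.
by rewrite /is_path_uv rev_uniq Hu sorted_adj_rev // revK Hh Ht.
Qed.

End Adj.

Local Open Scope ring_scope.
Section Wt.
Variable R : realType.
Variable d : nat.
Notation V := (vtx d).
Variable H : R.
Variable tau : V * V -> \bar R.
Hypothesis H0 : 0 < H.
Hypothesis tau0 : forall f, (0 <= tau f)%E.

Lemma wt_ge0 f : 0 <= wtH H tau f.
Proof.
rewrite /wtH. apply: fine_ge0. rewrite le_min tau0 /= lee_fin. exact: ltW.
Qed.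

Lemma sum_subseq_le (s1 s2 : seq (V * V)) :
  subseq s1 s2 -> \sum_(f <- s1) wtH H tau f <= \sum_(f <- s2) wtH H tau f.
Proof.
elim: s2 s1 => [|b s2 IH] [|a s1] //=.
  move=> _. rewrite big_nil. apply: sumr_ge0 => f _. exact: wt_ge0.
case: eqP => [->|_] Hs.
  rewrite !big_cons lerD2l. exact: IH.
rewrite [X in _ <= X]big_cons. apply: (le_trans (IH _ Hs)). rewrite lerDr. exact: wt_ge0.
Qed.

Lemma pweightE s : pweight H tau s = \sum_(f <- edg s) wtH H tau f.
Proof. by rewrite /pweight pedgesE. Qed.

Lemma pweight_rev s : sorted adj s -> pweight H tau (rev s) = pweight H tau s.
Proof. move=> Hs. by rewrite !pweightE edg_rev // big_rev. Qed.

Lemma pweight_lerase s : pweight H tau (lerase s) <= pweight H tau s.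
Proof. rewrite !pweightE. apply: sum_subseq_le. exact: lerase_edg. Qed.

End Wt.


Section Seqs.
Variable T : eqType.

Lemma split_first (P : pred T) s : has P s ->
  exists s1 a s2, [/\ s = s1 ++ a :: s2, P a & ~~ has P s1].
Proof.
elim: s => [|b s IH] //=.
case Pb: (P b) => /= Hs; first by exists [::], b, s.
case: (IH Hs) => s1 [a [s2 [-> Pa Hn]]].
by exists (b :: s1), a, s2; rewrite /= Pb.
Qed.

Lemma split_last (P : pred T) s : has P s ->
  exists s1 a s2, [/\ s = s1 ++ a :: s2, P a & ~~ has P s2].
Proof.
rewrite -has_rev => /split_first [s1 [a [s2 [E Pa Hn]]]].
exists (rev s2), a, (rev s1); split => //; last by rewrite has_rev.
by rewrite -(revK s) E rev_cat rev_cons cat_rcons.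
Qed.

Lemma sorted_infix (e : rel T) s1 s2 s3 : sorted e (s1 ++ s2 ++ s3) -> sorted e s2.
Proof. by case/cat_sorted2 => _ /cat_sorted2 []. Qed.

Lemma uniq_infix (s1 s2 s3 : seq T) : uniq (s1 ++ s2 ++ s3) -> uniq s2.
Proof. by rewrite !cat_uniq => /and3P [_ _ /and3P []]. Qed.

Lemma sorted_adj_last (e : rel T) s1 a t b s2 :
  sorted e (s1 ++ a :: t ++ b :: s2) -> e (last a t) b.
Proof.
rewrite sorted_cat_cons => /andP [_]. by rewrite cat_path => /and3P [_ /= ->].
Qed.

Lemma sorted_suffix_last (e : rel T) L a t M :
  sorted e (L ++ a :: t ++ M) -> sorted e (last a t :: M).
Proof. by rewrite -cat_cons lastI cat_rcons catA => /cat_sorted2 []. Qed.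

Lemma sorted_prefix_rcons (e : rel T) L a r :
  sorted e (L ++ a :: r) -> sorted e (rcons L a).
Proof. by rewrite -cat_rcons => /cat_sorted2 []. Qed.

Lemma sorted_join (e : rel T) L a t M :
  sorted e (rcons L a) -> sorted e (a :: t) -> sorted e (last a t :: M) ->
  sorted e (L ++ a :: t ++ M).
Proof.
move=> H1 H2 H3. rewrite sorted_cat_cons H1 cat_path. by rewrite /= in H2 H3; rewrite H2 H3.
Qed.

Lemma last_join (z : T) L a t M : last z (L ++ a :: t ++ M) = last (last a t) M.
Proof. by rewrite last_cat /= last_cat. Qed.

Lemma head_join (x : T) g L a r r' : x :: g = L ++ a :: r ->
  exists w0, L ++ a :: r' = x :: w0.
Proof.
case: L => [|l L] /= [-> _]; first by exists r'.
by exists (L ++ a :: r').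
Qed.

End Seqs.

Local Open Scope ring_scope.

Section Opt.
Variable R : realType.
Variable d : nat.
Notation V := (vtx d).
Variable H : R.
Variable tau : V * V -> \bar R.
Hypothesis H0 : 0 < H.
Hypothesis tau0 : forall f, (0 <= tau f)%E.

Lemma pweight_decomp L a t M : pweight H tau (L ++ a :: t ++ M) =
  pweight H tau (rcons L a) + pweight H tau (a :: t) + pweight H tau (last a t :: M).
Proof. by rewrite !pweightE edg_decomp !big_cat /= addrA. Qed.

Lemma seg_opt x y g L a t M t' :
  geod H tau predT x y g -> g = L ++ a :: t ++ M ->
  sorted adj (a :: t') -> last a t' = last a t ->
  pweight H tau (a :: t) <= pweight H tau (a :: t').
Proof.
case=> Hp _ Hopt Eg Hs' El.
have [g0 [Eg0 Ly Hu Hs]] := (proj1 (ispathP _ _ _) Hp).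
set w := L ++ a :: t' ++ M.
have Hw : sorted adj w.
  rewrite Eg in Hs. rewrite /w. apply: sorted_join => //.
  - exact: sorted_prefix_rcons Hs.
  - rewrite El. exact: sorted_suffix_last Hs.
have [w0 Ew] : exists w0, w = x :: w0.
  apply: (@head_join _ x g0 L a (t ++ M)). by rewrite -Eg0 Eg.
have Lw : last x w0 = y.
  rewrite -Ly. have := last_join x L a t' M. rewrite -/w Ew /= => ->.
  have := last_join x L a t M. rewrite -Eg Eg0 /= => ->. by rewrite El.
case: (lerase_spec x w0) => r [Er Lr].
have Pe : is_path_uv x y (lerase w).
  apply/(proj2 (ispathP _ _ _)); exists r; split.
  - by rewrite Ew.
  - by rewrite Lr.
  - exact: lerase_uniq.
  - exact: lerase_sorted.
have := Hopt _ Pe (all_predT _).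
move/le_trans/(_ (pweight_lerase H0 tau0 w)).
rewrite Eg /w !pweight_decomp El.
by rewrite lerD2r lerD2l.
Qed.

End Opt.

Section Box.
Variable R : realType.
Variable d : nat.
Notation V := (vtx d).

Lemma box_mono (t t' : R) (x z : V) : t <= t' -> box t x z -> box t' x z.
Proof.
move=> Ht /forallP Hb; apply/forallP => i. exact: le_trans (Hb i) Ht.
Qed.

Lemma adj_coord (u v : V) i : adj u v -> (`|u i - v i| <= 1)%N.
Proof.
rewrite /adj /dist1 => /eqP H.
by rewrite -H (bigD1 i) //= leq_addr.
Qed.

Lemma box_adj (t : R) (x z z' : V) : box t x z -> adj z z' -> box (t + 1) x z'.
Proof.
move=> /forallP Hb Ha; apply/forallP => i.
have -> : z' i - x i = (z' i - z i) + (z i - x i) by rewrite addrA subrK.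
rewrite intrD. apply: le_trans (ler_normD _ _) _.
rewrite addrC lerD //. rewrite -intr_norm -abszE.
rewrite (_ : ((`|z' i - z i|%N)%:Z)%:~R = (`|z' i - z i|%N)%:R :> R) //.
rewrite -(mulr1n (1:R)) ler_nat. by rewrite adj_sym in Ha; apply: adj_coord.
Qed.

End Box.

Local Open Scope ring_scope.

Section BoxN.
Variable R : realType.
Variable d : nat.
Notation V := (vtx d).
Variable N : nat.
Hypothesis HN : (3 <= N)%N.
Variable c : V.

Lemma NR_ge0 : 0 <= (N%:R : R).
Proof. exact: ler0n. Qed.

Lemma inner_box3 z : box (N%:R - 1 : R) c z -> box (3 * N%:R : R) c z.
Proof.
apply: box_mono. have := NR_ge0. lra.
Qed.

Lemma inner_adj b a : box (N%:R - 1 : R) c b -> adj b a -> box (N%:R : R) c a.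
Proof. move=> Hb Ha. have := box_adj Hb Ha. by rewrite subrK. Qed.

Lemma boxN_box3 z : box (N%:R : R) c z -> box (3 * N%:R : R) c z.
Proof. apply: box_mono. have := NR_ge0. lra. Qed.

Lemma out_adj v o : adj v o -> ~~ box (3 * N%:R : R) c o -> ~~ box (3 * N%:R - 1 : R) c v.
Proof.
move=> Ha Ho; apply/negP => Hv. have := box_adj Hv Ha. rewrite subrK => H.
by rewrite H in Ho.
Qed.

Lemma center_inner : box (N%:R - 1 : R) c c.
Proof.
apply/forallP => i. rewrite subrr normr0 subr_ge0.
rewrite -(mulr1n (1:R)) ler_nat. by apply: leq_trans HN.
Qed.

End BoxN.

Lemma mem_split (T : eqType) (x : T) s : x \in s -> exists s1 s2, s = s1 ++ x :: s2.
Proof. by case/splitPr => s1 s2; exists s1, s2. Qed.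

Lemma canon_fst d (a b : vtx d) : (canon a b).1 = a \/ (canon a b).1 = b.
Proof. rewrite /canon; case: ifP => _ /=; tauto. Qed.

Theorem proposition2p5 (R : realType) (d : nat) (tau : vtx d * vtx d -> \bar R)
  (lam H Cs : R) (Re : nat) (x y : vtx d) (gamma : seq (vtx d)) (e : vtx d * vtx d) :
  0 < lam -> 0 < H -> 3 <= Cs ->
  (forall f, (0 <= tau f)%E) ->
  is_eff_radius lam H Cs tau e Re ->
  geod H tau predT x y gamma ->
  e \in pedges gamma ->
  ~~ box (3 * (Re%:R : R)) e.1 x -> ~~ box (3 * (Re%:R : R)) e.1 y ->
  exists eta : seq (vtx d),
    [/\ is_path_uv x y eta,
        (forall z, z \in eta -> ~~ box ((Re%:R : R) - 1) e.1 z),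
        (forall f, f \in pedges eta -> f \notin pedges gamma -> qopen lam tau f) &
        (count (fun f => f \notin pedges gamma) (pedges eta))%:R <= Cs * Re%:R].
Proof.
move=> Hlam HH HCs Htau [HN Hgood _] Hgeod He Hx Hy.
set N := Re in HN Hgood Hx Hy *.
set inner := box (N%:R - 1 : R) e.1.
set outer := [pred z | ~~ box (3 * N%:R : R) e.1 z].
have [Hp _ Hopt] := Hgeod.
have [g0 [Eg0 Ly Hu Hs]] := proj1 (ispathP _ _ _) Hp.
rewrite pedgesE in He.
have He1 : e.1 \in gamma.
  case: (edg_mem1 He) => a [b [Ee Ha Hb]].
  by case: (canon_fst a b); rewrite -Ee => ->.
have Hin1 : inner e.1 by apply: center_inner.
have Hio z : inner z -> ~~ outer z.
  by move=> Hz; rewrite /outer inE negbK; apply: inner_box3.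
have [A1 [b1 [A2 [EA Hb1 HA1]]]] : exists s1 a s2,
    [/\ gamma = s1 ++ a :: s2, inner a & ~~ has inner s1].
  apply: split_first. by apply/hasP; exists e.1.
have HoA1 : has outer A1.
  case: A1 EA HA1 => [|a A1'] EA HA1.
    move: Eg0; rewrite EA => -[Ex _]. by rewrite Ex in Hb1; move: (Hio _ Hb1); rewrite /outer inE Hx.
  move: Eg0; rewrite EA => -[Ex _]. by rewrite /= Ex /outer /= Hx.
have [X1 [o1 [c1r [EA1 Ho1 Hc1o]]]] := split_last HoA1.
have EG1 : gamma = X1 ++ o1 :: c1r ++ b1 :: A2 by rewrite EA EA1 -catA.
have Hc1i : ~~ has inner c1r.
  by move: HA1; rewrite EA1 has_cat /= negb_or negb_or => /and3P [].
case: c1r EA1 EG1 Hc1o Hc1i => [|a1 t1] EA1 EG1 Hc1o Hc1i.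
  have Hadj : adj o1 b1.
    have := @sorted_adj_last _ adj X1 o1 [::] b1 A2. rewrite /= -EG1. exact.
  have := inner_adj Hb1 (_ : adj b1 o1). rewrite adj_sym => /(_ Hadj) /boxN_box3.
  by move: Ho1; rewrite /outer inE => /negbTE ->.
have EG1' : gamma = rcons X1 o1 ++ (a1 :: t1) ++ b1 :: A2 by rewrite cat_rcons.
have Hs1 : sorted adj (a1 :: t1) by apply: (@sorted_infix _ adj (rcons X1 o1) _ (b1 :: A2)); rewrite -EG1'.
have Hu1 : uniq (a1 :: t1) by apply: (@uniq_infix _ (rcons X1 o1) _ (b1 :: A2)); rewrite -EG1'.
have Hadj1 : adj o1 a1.
  have := @sorted_adj_last _ adj X1 o1 [::] a1 (t1 ++ b1 :: A2). rewrite /= -EG1. exact.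
have Hadj1' : adj (last a1 t1) b1.
  have := @sorted_adj_last _ adj (rcons X1 o1) a1 t1 b1 A2. rewrite -EG1'. exact.
have Hc1oP := hasPn Hc1o. have Hc1iP := hasPn Hc1i.
have Hc1box z : z \in a1 :: t1 -> box (3 * N%:R : R) e.1 z.
  by move=> Hz; move: (Hc1oP z Hz); rewrite /outer /= negbK.
have Hc1ann : all (annulus (R:=R) N e) (rev (a1 :: t1)).
  rewrite all_rev; apply/allP => z Hz. by rewrite /annulus Hc1box //= (Hc1iP z Hz).
have HP1 : is_path_uv a1 (last a1 t1) (a1 :: t1).
  by apply/(proj2 (ispathP _ _ _)); exists t1; split.
have Cross1 : crossing (R:=R) N e (rev (a1 :: t1)).
  split => //. exists (last a1 t1), a1. split.
  - exact: path_rev.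
  - rewrite /bdry (Hc1iP _ (mem_last _ _)) andbT.
    apply: inner_adj Hb1 _. by rewrite adj_sym.
  - rewrite /bdry Hc1box ?mem_head //=.
    apply: out_adj Ho1. by rewrite adj_sym.
have H3Cs : 3 * (N%:R : R) <= Cs * N%:R by rewrite ler_wpM2r // ler0n.
have Geo1 : geodA H tau (box (Cs * N%:R) e.1) (rev (a1 :: t1)).
  exists (last a1 t1), a1; split.
  - apply: box_mono H3Cs _. exact/Hc1box/mem_last.
  - apply: box_mono H3Cs _. exact/Hc1box/mem_head.
  split.
  - exact: path_rev.
  - rewrite all_rev; apply/allP => z Hz. apply: box_mono H3Cs _. exact: Hc1box.
  move=> s' Ps' _.
  have Ps'' := path_rev Ps'.
  have [t' [Et' Lt' _ St']] := proj1 (ispathP _ _ _) Ps''.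
  rewrite pweight_rev // -(revK s') pweight_rev; last by case/and4P: Ps''.
  rewrite Et'. apply: (seg_opt HH Htau Hgeod EG1'). by rewrite -Et'. by rewrite Lt'.
have [B1 [b2 [B2 [EB Hb2 HB2]]]] : exists s1 a s2,
    [/\ gamma = s1 ++ a :: s2, inner a & ~~ has inner s2].
  apply: split_last. by apply/hasP; exists e.1.
have Ly' : forall z, last z gamma = y by move=> z; rewrite Eg0.
have HoB2 : has outer B2.
  case: B2 EB HB2 => [|a B2'] EB HB2.
    move: (Ly' x); rewrite EB last_cat /= => Eb.
    by rewrite Eb in Hb2; move: (Hio _ Hb2); rewrite /outer /= Hy.
  apply/hasP; exists (last a B2'); first exact: mem_last.
  move: (Ly' x); rewrite EB last_cat /= => ->. by rewrite /outer /= Hy.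
have [c2 [o2 [Y2 [EB2 Ho2 Hc2o]]]] := split_first HoB2.
have EG2 : gamma = B1 ++ b2 :: c2 ++ o2 :: Y2 by rewrite EB EB2.
have Hc2i : ~~ has inner c2.
  by move: HB2; rewrite EB2 has_cat negb_or => /andP [].
case: c2 EB2 EG2 Hc2o Hc2i => [|a2 t2] EB2 EG2 Hc2o Hc2i.
  have Hadj : adj b2 o2.
    have := @sorted_adj_last _ adj B1 b2 [::] o2 Y2. rewrite /= -EG2. exact.
  have := inner_adj Hb2 Hadj => /boxN_box3.
  by move: Ho2; rewrite /outer /= => /negbTE ->.
have EG2' : gamma = rcons B1 b2 ++ (a2 :: t2) ++ o2 :: Y2 by rewrite cat_rcons.
have Hs2 : sorted adj (a2 :: t2) by apply: (@sorted_infix _ adj (rcons B1 b2) _ (o2 :: Y2)); rewrite -EG2'.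
have Hu2 : uniq (a2 :: t2) by apply: (@uniq_infix _ (rcons B1 b2) _ (o2 :: Y2)); rewrite -EG2'.
have Hadj2 : adj b2 a2.
  have := @sorted_adj_last _ adj B1 b2 [::] a2 (t2 ++ o2 :: Y2). rewrite /= -EG2. exact.
have Hadj2' : adj (last a2 t2) o2.
  have := @sorted_adj_last _ adj (rcons B1 b2) a2 t2 o2 Y2. rewrite -EG2'. exact.
have Hc2oP := hasPn Hc2o. have Hc2iP := hasPn Hc2i.
have Hc2box z : z \in a2 :: t2 -> box (3 * N%:R : R) e.1 z.
  by move=> Hz; move: (Hc2oP z Hz); rewrite /outer /= negbK.
have Hc2ann : all (annulus (R:=R) N e) (a2 :: t2).
  apply/allP => z Hz. by rewrite /annulus Hc2box //= (Hc2iP z Hz).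
have HP2 : is_path_uv a2 (last a2 t2) (a2 :: t2).
  by apply/(proj2 (ispathP _ _ _)); exists t2; split.
have Cross2 : crossing (R:=R) N e (a2 :: t2).
  split => //. exists a2, (last a2 t2). split => //.
  - rewrite /bdry (Hc2iP _ (mem_head _ _)) andbT.
    exact: inner_adj Hb2 _.
  - rewrite /bdry Hc2box ?mem_last //=.
    exact: out_adj Ho2.
have Geo2 : geodA H tau (box (Cs * N%:R) e.1) (a2 :: t2).
  exists a2, (last a2 t2); split.
  - apply: box_mono H3Cs _. exact/Hc2box/mem_head.
  - apply: box_mono H3Cs _. exact/Hc2box/mem_last.
  split => //.
  - apply/allP => z Hz. apply: box_mono H3Cs _. exact: Hc2box.
  move=> s' Ps' _.
  have [t' [Et' Lt' _ St']] := proj1 (ispathP _ _ _) Ps'.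
  rewrite Et'. apply: (seg_opt HH Htau Hgeod EG2'). by rewrite -Et'. by rewrite Lt'.
have [u [v [s [[Ps Hsa Hmu Hmv] [Hq Hl]]]]] := Hgood _ _ Geo1 Cross1 Geo2 Cross2.
rewrite /= mem_rev in Hmu. rewrite /= in Hmv.
have [P [Q Ec1]] := mem_split Hmu.
have [P' [Q' Ec2]] := mem_split Hmv.
have [s0 [Es0 Ls0 _ Ss]] := proj1 (ispathP _ _ _) Ps.
set L := X1 ++ o1 :: P.
set M := Q' ++ o2 :: Y2.
set w := L ++ u :: s0 ++ M.
have EGa : gamma = L ++ u :: (Q ++ b1 :: A2) by rewrite EG1 Ec1 /L -!catA.
have EGb : gamma = (B1 ++ b2 :: P') ++ v :: M by rewrite EG2 Ec2 /M -!catA.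
have Hw : sorted adj w.
  apply: sorted_join.
  - rewrite EGa in Hs. exact: sorted_prefix_rcons Hs.
  - by rewrite -Es0.
  - rewrite Ls0. by move: Hs; rewrite EGb => /cat_sorted2 [].
have [w0 Ew] : exists w0, w = x :: w0.
  apply: (@head_join _ x g0 L u (Q ++ b1 :: A2)). by rewrite -Eg0 -EGa.
have Lw : last x w0 = y.
  have := last_join x L u s0 M. rewrite -/w Ew /= => ->.
  by rewrite Ls0 -(Ly' x) EGb last_cat.
case: (lerase_spec x w0) => r [Er Lr].
exists (lerase w). rewrite !pedgesE.
have Hedg : forall f, f \in edg (lerase w) -> f \notin edg gamma -> f \in edg s.
  move=> f Hf Hg. have := mem_subseq (lerase_edg w) Hf.
  rewrite /w edg_decomp Ls0 -Es0 !mem_cat => /or3P [H1|//|H1].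
  - rewrite EGa -cat_rcons in Hg. by rewrite (edg_prefix _ H1) in Hg.
  - rewrite EGb in Hg. by rewrite (edg_suffix _ H1) in Hg.
split.
- apply/(proj2 (ispathP _ _ _)); exists r; split.
  + by rewrite Ew.
  + by rewrite Lr.
  + exact: lerase_uniq.
  + exact: lerase_sorted.
- move=> z Hz0; have := lerase_sub Hz0.
  have EA1' : A1 = L ++ (u :: Q) by rewrite EA1 Ec1 /L -catA.
  have EB2' : B2 = (rcons P' v) ++ M by rewrite EB2 Ec2 /M cat_rcons -catA.
  rewrite /w (mem_cat z L) inE (mem_cat z s0) => /orP [Hz|/orP [Hz|/orP [Hz|Hz]]].
  + apply: (hasPn HA1). by rewrite EA1' mem_cat Hz.
  + move: Hsa; rewrite Es0 /= => /andP [Ha _]. rewrite (eqP Hz).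
    by case/andP: Ha.
  + move/allP: Hsa => /(_ z). rewrite Es0 inE Hz orbT => /(_ isT).
    by case/andP.
  + apply: (hasPn HB2). by rewrite EB2' mem_cat Hz orbT.
- move=> f Hf Hg. move/allP: Hq => /(_ f). rewrite pedgesE. apply. exact: Hedg.
- apply: le_trans Hl. rewrite ler_nat.
  apply: leq_trans (leq_count_subseq _ (lerase_edg w)) _.
  rewrite /w edg_decomp !count_cat Ls0 -Es0.
  have -> : count (fun f => f \notin edg gamma) (edg (rcons L u)) = 0%N.
    apply/eqP; rewrite -leqn0 leqNgt -has_count. apply/hasPn => f Hf.
    by rewrite negbK EGa -cat_rcons edg_prefix.
  have -> : count (fun f => f \notin edg gamma) (edg (v :: M)) = 0%N.
    apply/eqP; rewrite -leqn0 leqNgt -has_count. apply/hasPn => f Hf.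
    by rewrite negbK EGb edg_suffix.
  rewrite add0n addn0 /plen -size_edg -pedgesE. exact: count_size.
Qed.
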